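(* Let $f\in A[X]$ be monic with discriminant $\Delta=\mathrm{Res}_X(f,f')\neq 0$, $r=v(\Delta)$, and let $N>2r$ be an integer. Then the number of roots in $A/\pi^NA$ of the reduction $f_N$ of $f$ modulo $\pi^N$ is at most $q^r$ times the number of roots of $f$ in $K$.
   Context: $K$ is a field complete with respect to a non-archimedean discrete valuation $v$, normalized by $v(\pi)=1$ for a uniformizer $\pi$ of the valuation ring $A=\{x\in K: v(x)\geq 0\}$; the residue field $A/\pi A$ is finite with $q$ elements. *)

(* Defs.v *)
From HB Require Import structures.
From mathcomp Require Import all_boot all_order all_algebra.
Set Implicit Arguments. Unset Strict Implicit. Unset Printing Implicit Defensive.
Import Order.TTheory GRing.Theory Num.Theory.
Local Open Scope ring_scope.

(* The valuation v : K -> int is meaningful only on nonzero elements;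
   v(0) = +oo is encoded by the predicate [vge] below. *)

Definition vge (K : fieldType) (v : K -> int) (n : int) (x : K) : bool :=
  (x == 0) || (n <= v x).

Definition inA (K : fieldType) (v : K -> int) (x : K) : bool := vge v 0 x.

Definition congr_mod (K : fieldType) (v : K -> int) (n : nat) (x y : K) : bool :=
  vge v n%:Z (x - y).

Definition normalized_discrete_valuation (K : fieldType) (v : K -> int) (pi : K)
  : Prop :=
  [/\ forall x y : K, x != 0 -> y != 0 -> v (x * y) = v x + v y,
      forall x y : K, x != 0 -> y != 0 -> x + y != 0 ->
        Order.min (v x) (v y) <= v (x + y),
      pi != 0 & v pi = 1].

Definition vcauchy (K : fieldType) (v : K -> int) (u : nat -> K) : Prop :=
  forall M : int, exists n0 : nat, forall m n : nat,
    (n0 <= m)%N -> (n0 <= n)%N -> vge v M (u m - u n).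

Definition vconverges (K : fieldType) (v : K -> int) (u : nat -> K) (l : K) : Prop :=
  forall M : int, exists n0 : nat, forall n : nat, (n0 <= n)%N -> vge v M (u n - l).

Definition vcomplete (K : fieldType) (v : K -> int) : Prop :=
  forall u : nat -> K, vcauchy v u -> exists l : K, vconverges v u l.

(* the residue field A / pi A has exactly q elements: there is a complete
   system of q pairwise incongruent representatives in A *)
Definition residue_card (K : fieldType) (v : K -> int) (q : nat) : Prop :=
  exists s : seq K,
    [/\ size s = q,
        all (inA v) s,
        forall i j : nat, (i < size s)%N -> (j < size s)%N ->
          congr_mod v 1 (nth 0 s i) (nth 0 s j) -> i = j
      & forall a : K, inA v a -> exists2 b, b \in s & congr_mod v 1 a b].

Definition polyA (K : fieldType) (v : K -> int) (f : {poly K}) : Prop :=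
  forall i : nat, inA v f`_i.

(* Main.v *)
Require Import Defs.
From HB Require Import structures.
From mathcomp Require Import all_boot all_order all_algebra zify ring.
Import Order.TTheory GRing.Theory Num.Theory.
Local Open Scope ring_scope.
Set Implicit Arguments. Unset Strict Implicit.

Section MapRes.
Variables (aR rR : nzRingType) (f : {rmorphism aR -> rR}).
Lemma map_resultant' (p q : {poly aR}) :
    f (lead_coef p) != 0 -> f (lead_coef q) != 0 ->
  f (resultant p q)= resultant (map_poly f p) (map_poly f q).
Proof.
move=> nz_fp nz_fq; rewrite /resultant /Sylvester_mx !size_map_poly_id0 //.
rewrite -det_map_mx /= map_col_mx; congr (\det (col_mx _ _));
  by apply: map_lin1_mx => v; rewrite map_poly_rV rmorphM /= map_rVpoly.
Qed.
End MapRes.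

Section Val.
Variables (K : fieldType) (v : K -> int) (pi : K).
Hypothesis Hv : normalized_discrete_valuation v pi.

Lemma vM {x y} : x != 0 -> y != 0 -> v (x * y) = v x + v y.
Proof. by case: Hv => H *; apply: H. Qed.
Lemma vD {x y} : x != 0 -> y != 0 -> x + y != 0 -> Order.min (v x) (v y) <= v (x + y).
Proof. by case: Hv => _ H *; apply: H. Qed.
Lemma pi0 : pi != 0. Proof. by case: Hv. Qed.
Lemma vpi : v pi = 1. Proof. by case: Hv. Qed.

Lemma v1 : v 1 = 0.
Proof. have := @vM 1 1 (oner_neq0 K) (oner_neq0 K); rewrite mulr1; lia. Qed.

Lemma vN1 : v (-1) = 0.
Proof.
have n1 : (-1 : K) != 0 by rewrite oppr_eq0 oner_neq0.
have := @vM _ _ n1 n1; rewrite mulrNN mulr1 v1; lia.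
Qed.

Lemma vN x : v (- x) = v x.
Proof.
have [->|x0] := eqVneq x 0; first by rewrite oppr0.
by rewrite -mulN1r vM ?oppr_eq0 ?oner_neq0 // vN1 add0r.
Qed.

Lemma vV x : x != 0 -> v x^-1 = - v x.
Proof.
move=> x0; have := @vM _ _ x0 (invr_neq0 x0); rewrite mulfV // v1 => /eqP.
by rewrite eq_sym addr_eq0 => /eqP ->; rewrite opprK.
Qed.

Lemma vX x n : x != 0 -> v (x ^+ n) = n%:Z * v x.
Proof.
move=> x0; elim: n => [|n IH]; first by rewrite expr0 v1 mul0r.
by rewrite exprS vM ?expf_neq0 // IH intS mulrDl mul1r.
Qed.

Lemma vge0x n : vge v n 0. Proof. by rewrite /vge eqxx. Qed.

Lemma vge_add n x y : vge v n x -> vge v n y -> vge v n (x + y).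
Proof.
rewrite /vge => /orP[/eqP->|hx]; first by rewrite add0r.
move=> /orP[/eqP->|hy]; first by rewrite addr0 hx orbT.
have [->|s0] := eqVneq (x + y) 0 => //=.
have [x0|y0] : x = 0 \/ x != 0 by case: eqVneq; auto.
  by rewrite x0 add0r hy.
have [y0'|y0'] : y = 0 \/ y != 0 by case: eqVneq; auto.
  by rewrite y0' addr0 hx.
have := vD y0 y0' s0; rewrite /Order.min; case: ifP => _ h; exact: le_trans h.
Qed.

Lemma vge_opp n x : vge v n x -> vge v n (- x).
Proof. by rewrite /vge oppr_eq0 vN. Qed.

Lemma vge_sub n x y : vge v n x -> vge v n y -> vge v n (x - y).
Proof. by move=> hx hy; apply: vge_add => //; apply: vge_opp. Qed.

Lemma vge_mul {m n x y} : vge v m x -> vge v n y -> vge v (m + n) (x * y).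
Proof.
rewrite /vge mulf_eq0; have [->|x0] := eqVneq x 0; first by [].
have [->|y0] := eqVneq y 0; first by rewrite orbT.
by move=> /= hx hy; rewrite vM // lerD.
Qed.

Lemma vge_le m n x : m <= n -> vge v n x -> vge v m x.
Proof. by rewrite /vge => hmn /orP[->//|h]; rewrite (le_trans hmn h) orbT. Qed.

Lemma vge_pi k : vge v k%:Z (pi ^+ k).
Proof. by rewrite /vge vX ?pi0 // vpi mulr1 lexx orbT. Qed.

Lemma vge_divpi n k x : vge v n x -> vge v (n - k%:Z) (x / pi ^+ k).
Proof.
rewrite /vge mulf_eq0 invr_eq0; have [->|x0] := eqVneq x 0; first by [].
move=> /= h; rewrite vM ?invr_eq0 ?expf_neq0 ?pi0 // vV ?expf_neq0 ?pi0 //.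
by rewrite vX ?pi0 // vpi mulr1 lerD2r h orbT.
Qed.

Lemma vge_mulpi n k x : vge v (n - k%:Z) (x / pi ^+ k) -> vge v n x.
Proof.
move=> h; have := vge_mul h (vge_pi k).
by rewrite subrK divfK // expf_neq0 // pi0.
Qed.

Lemma vgeE n x : x != 0 -> vge v n x = (n <= v x).
Proof. by rewrite /vge => /negPf ->. Qed.

Lemma inA1 : inA v 1. Proof. by rewrite /inA /vge v1 lexx orbT. Qed.

Lemma inA_subring : subring_closed (inA v).
Proof.
split; first exact: inA1.
  by move=> x y hx hy; apply: vge_sub.
by move=> x y hx hy; have := vge_mul hx hy; rewrite addr0.
Qed.

HB.instance Definition _ := GRing.isSubringClosed.Build K (inA v) inA_subring.

Record Atype := MkA { Aval :> K; AvalP : inA v Aval }.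
HB.instance Definition _ := [isSub for Aval].
HB.instance Definition _ := [Choice of Atype by <:].
HB.instance Definition _ := [SubChoice_isSubComNzRing of Atype by <:].


Lemma liftA {f : {poly K}} : polyA v f -> {fA : {poly Atype} | map_poly val fA = f}.
Proof.
move=> hf; exists (\poly_(i < size f) @MkA f`_i (hf i)).
apply/polyP=> i; rewrite coef_map coef_poly /=; case: ltnP => // hi.
by rewrite nth_default.
Qed.

Lemma polyA_map (u : {poly Atype}) : polyA v (map_poly val u).
Proof. by move=> i; rewrite coef_map; apply: valP. Qed.

Lemma bezoutA (f g : {poly K}) : polyA v f -> polyA v g ->
  (1 < size f)%N -> (1 < size g)%N ->
  exists u w, [/\ polyA v u, polyA v w & (resultant f g)%:P = u * f + w * g].
Proof.
move=> hf hg sf sg.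
have [fA eA] := liftA hf; have [gA eB] := liftA hg.
have sfA : size fA = size f by rewrite -eA size_map_inj_poly //; apply: val_inj.
have sgA : size gA = size g by rewrite -eB size_map_inj_poly //; apply: val_inj.
have sfA' : (1 < size fA)%N by rewrite sfA.
have sgA' : (1 < size gA)%N by rewrite sgA.
have [[u w] /= _ Hr] := resultant_in_ideal sfA' sgA'.
exists (map_poly val u), (map_poly val w); split; try exact: polyA_map.
have H := congr1 (map_poly val) Hr; rewrite map_polyC rmorphD !rmorphM /= in H.
have lf : val (lead_coef fA) != 0.
  rewrite -lead_coef_map_inj //; last exact: val_inj.
  by rewrite eA lead_coef_eq0 -size_poly_gt0 (ltn_trans _ sf).
have lg : val (lead_coef gA) != 0.
  rewrite -lead_coef_map_inj //; last exact: val_inj.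
  by rewrite eB lead_coef_eq0 -size_poly_gt0 (ltn_trans _ sg).
by rewrite -eA -eB -map_resultant' //; exact: H.
Qed.

End Val.

Section Poly.
Variables (K : fieldType) (v : K -> int) (pi : K).
Hypothesis Hv : normalized_discrete_valuation v pi.

Lemma inA_add x y : inA v x -> inA v y -> inA v (x + y).
Proof. exact: (vge_add Hv). Qed.
Lemma inA_sub x y : inA v x -> inA v y -> inA v (x - y).
Proof. exact: (vge_sub Hv). Qed.
Lemma inA_mul x y : inA v x -> inA v y -> inA v (x * y).
Proof. by move=> hx hy; have := vge_mul Hv hx hy; rewrite addr0. Qed.
Lemma inA0 : inA v 0. Proof. exact: vge0x. Qed.
Lemma inA_natmul x n : inA v x -> inA v (x *+ n).
Proof. by move=> hx; elim: n => [|n IH]; [rewrite mulr0n inA0 | rewrite mulrS inA_add]. Qed.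

Lemma polyA_MXaddC p c : polyA v (p * 'X + c%:P) -> polyA v p /\ inA v c.
Proof.
move=> h; split; last by have := h 0%N; rewrite coefD coefMX coefC /= add0r.
by move=> i; have := h i.+1; rewrite coefD coefMX coefC /= addr0.
Qed.

Lemma inA_horner p x : polyA v p -> inA v x -> inA v p.[x].
Proof.
elim/poly_ind: p => [|p c IH] hp hx; first by rewrite horner0 inA0.
have [hp' hc] := polyA_MXaddC hp.
by rewrite hornerMXaddC inA_add // inA_mul // IH.
Qed.

Lemma polyA_deriv p : polyA v p -> polyA v p^`().
Proof. by move=> hp i; rewrite coef_deriv inA_natmul. Qed.

Lemma horner_diff p x h n : polyA v p -> inA v x -> inA v h -> vge v n h ->
  vge v n (p.[x + h] - p.[x]).
Proof.
elim/poly_ind: p => [|p c IH] hp hx hh hn; first by rewrite !horner0 subrr vge0x.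
have [hp' hc] := polyA_MXaddC hp.
have -> : (p * 'X + c%:P).[x + h] - (p * 'X + c%:P).[x] =
  (p.[x+h] - p.[x]) * (x + h) + p.[x] * h by rewrite !hornerMXaddC; ring.
apply: (vge_add Hv).
  by rewrite -[n]addr0; apply: (vge_mul Hv) => //; [apply: IH | apply: inA_add].
by rewrite -[n]add0r; apply: (vge_mul Hv) => //; apply: inA_horner.
Qed.

Lemma horner_taylor p x h n : polyA v p -> inA v x -> inA v h -> vge v n h ->
  vge v (n + n) (p.[x + h] - p.[x] - p^`().[x] * h).
Proof.
elim/poly_ind: p => [|p c IH] hp hx hh hn.
  by rewrite deriv0 !horner0 mul0r !subrr vge0x.
have [hp' hc] := polyA_MXaddC hp.
have -> : (p * 'X + c%:P).[x + h] - (p * 'X + c%:P).[x] - (p * 'X + c%:P)^`().[x] * h =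
  (p.[x+h] - p.[x] - p^`().[x] * h) * (x + h) + p^`().[x] * (h * h).
  by rewrite derivMXaddC hornerD hornerMX !hornerMXaddC; ring.
apply: (vge_add Hv).
  by rewrite -[n + n]addr0; apply: (vge_mul Hv) => //; [apply: IH | apply: inA_add].
rewrite -[n + n]add0r; apply: (vge_mul Hv) => //; first by apply: inA_horner => //; apply: polyA_deriv.
exact: (vge_mul Hv).
Qed.

End Poly.

Lemma resultant_const (R : comNzRingType) (p q : {poly R}) : (size q <= 1)%N ->
  resultant p q = q`_0 ^+ ((size q).-1 + (size p).-1).
Proof.
move=> hq; rewrite /resultant.
have -> : Sylvester_mx p q = (q`_0)%:M.
  apply/matrixP => i j; rewrite Sylvester_mxE !mxE.
  case: splitP => k hk.
    have e : (size q).-1 = 0%N by lia.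
    by move: (ltn_ord k); rewrite {2}e.
  have e : (size q).-1 = 0%N by lia.
  have ik : (i : nat) = k by rewrite hk e.
  have [kj|jk] := leqP k j; last first.
    rewrite mulr0n; case: eqP => [ij|]; last by rewrite mulr0n.
    by move: jk; rewrite -ik ij ltnn.
  rewrite mulr1n; case: (eqVneq i j) => [<-|nij].
    by rewrite ik subnn mulr1n.
  rewrite mulr0n nth_default //; move: nij; rewrite -val_eqE /= ik.
  move=> /eqP H; apply: leq_trans hq _; move: H kj; clear => H kj; rewrite subn_gt0 ltn_neqAle kj andbT; exact/eqP.
by rewrite det_scalar.
Qed.

Section Key.
Variables (K : fieldType) (v : K -> int) (pi : K).
Hypothesis Hv : normalized_discrete_valuation v pi.

Lemma inA_v x : inA v x -> x != 0 -> 0 <= v x.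
Proof. by rewrite /inA /vge => /orP[/eqP->|//]; rewrite eqxx. Qed.

Lemma size_f_gt1 (f : {poly K}) (N : nat) x : f \is monic -> (0 < N)%N ->
  vge v N%:Z f.[x] -> (1 < size f)%N.
Proof.
move=> hm hN hx; rewrite ltnNge; apply/negP => hs.
have e : f = 1.
  rewrite [f]size1_polyC //; congr (_%:P).
  by move/monicP: hm; rewrite lead_coefE; have -> : (size f).-1 = 0%N by lia.
move: hx; rewrite e hornerC /vge oner_eq0 /= (v1 Hv); lia.
Qed.

Lemma deriv_bound (f : {poly K}) (r N : nat) x : polyA v f -> f \is monic ->
  resultant f f^`() != 0 -> v (resultant f f^`()) = r%:Z -> (r < N)%N ->
  inA v x -> vge v N%:Z f.[x] -> f^`().[x] != 0 /\ v f^`().[x] <= r%:Z.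
Proof.
move=> hA hm hD hr hrN hx hfx.
have sf := size_f_gt1 hm (leq_ltn_trans (leq0n r) hrN) hfx.
have hA' := polyA_deriv Hv hA.
case: (leqP (size f^`()) 1) => hs.
  rewrite resultant_const // in hD hr.
  have ec := size1_polyC hs; rewrite ec hornerC.
  set c := f^`()`_0 in hD hr ec *.
  set m := ((size f^`()).-1 + (size f).-1)%N in hD hr.
  have m0 : (0 < m)%N by rewrite /m; lia.
  have c0 : c != 0 by apply: contraNneq hD => ->; rewrite expr0n eqn0Ngt m0.
  split => //; rewrite (vX Hv) // in hr.
  have := inA_v (hA' 0%N) c0; rewrite -/c => hc.
  rewrite -hr; have : (1 <= m%:Z) by lia.
  nia.
have [u [w [hu hw he]]] := bezoutA Hv hA hA' sf hs.
have hD' := congr1 (horner^~ x) he; rewrite /= hornerC hornerD !hornerM in hD'.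
have hux := inA_horner Hv hu hx; have hwx := inA_horner Hv hw hx.
have [h0|h0] := boolP ((f^`().[x] != 0) && (v f^`().[x] <= r%:Z)).
  by case/andP: h0.
have h1 : vge v (r%:Z + 1) f^`().[x].
  move: h0; rewrite negb_and negbK /vge => /orP[->//|h]; rewrite orbC; lia.
have h2 : vge v (r%:Z + 1) (resultant f f^`()).
  rewrite hD'; apply: (vge_add Hv).
    apply: (@vge_le _ _ _ (0 + N%:Z)); first lia.
    exact: (vge_mul Hv).
  rewrite -[_ + 1]add0r; exact: (vge_mul Hv).
by move: h2; rewrite /vge (negPf hD) hr; lia.
Qed.
End Key.

Fixpoint newt (K : fieldType) (f : {poly K}) (x d : K) (k : nat) : K :=
  if k is k'.+1 then newt f x d k' - f.[newt f x d k'] / d else x.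

Section Hensel.
Variables (K : fieldType) (v : K -> int) (pi : K).
Hypothesis Hv : normalized_discrete_valuation v pi.

Lemma vge_inv x : x != 0 -> vge v (- v x) x^-1.
Proof. by move=> x0; rewrite /vge invr_eq0 (negPf x0) (vV Hv x0) lexx orbT. Qed.

Lemma newt_inv (f : {poly K}) (x : K) (N : nat) (e : int) :
  polyA v f -> inA v x -> vge v N%:Z f.[x] -> f^`().[x] != 0 ->
  v f^`().[x] = e -> e + e < N%:Z -> forall k,
  let y := newt f x f^`().[x] k in
  [/\ inA v y, vge v (N%:Z - e) (y - x) & vge v (N%:Z + k%:Z) f.[y]].
Proof.
move=> hA hx hfx d0 he heN; set d := f^`().[x] in d0 he *.
have e0 : 0 <= e by rewrite -he; apply: (inA_v (inA_horner Hv (polyA_deriv Hv hA) hx)).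
elim=> [|k IH] /=.
  by rewrite subrr vge0x addr0 hx hfx.
case: IH; set y := newt f x d k => hy hyx hfy.
set h := - (f.[y] / d).
have hh : vge v (N%:Z + k%:Z - e) h.
  by apply: (vge_opp Hv); have := vge_mul Hv hfy (vge_inv d0); rewrite he.
have hhA : inA v h by apply: (@vge_le _ _ _ (N%:Z + k%:Z - e)) => //; lia.
have hyxA : inA v (y - x) by apply: (@vge_le _ _ _ (N%:Z - e)) => //; lia.
split.
- exact: (inA_add Hv).
- have -> : y + h - x = (y - x) + h by ring.
  apply: (vge_add Hv) => //; apply: (@vge_le _ _ _ (N%:Z + k%:Z - e)) => //; lia.
- have T := horner_taylor Hv hA hy hhA hh.
  have D : vge v (N%:Z - e) (f^`().[y] - d).
    have := horner_diff Hv (polyA_deriv Hv hA) hx hyxA hyx.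
    by rewrite [x + _]addrC subrK.
  have dh : d * h = - f.[y] by rewrite /h mulrN mulrC divfK.
  have -> : f.[y + h] = (f.[y + h] - f.[y] - f^`().[y] * h) + (f^`().[y] - d) * h.
    by rewrite mulrBl dh; ring.
  apply: (vge_add Hv).
    apply: (vge_le _ T); lia.
  apply: (vge_le _ (vge_mul Hv D hh)); lia.
Qed.
End Hensel.

Section Hensel2.
Variables (K : fieldType) (v : K -> int) (pi : K).
Hypothesis Hv : normalized_discrete_valuation v pi.

Lemma hensel (f : {poly K}) (x : K) (N : nat) (e : int) : vcomplete v ->
  polyA v f -> inA v x -> vge v N%:Z f.[x] -> f^`().[x] != 0 ->
  v f^`().[x] = e -> e + e < N%:Z ->
  exists a, root f a /\ vge v (N%:Z - e) (a - x).
Proof.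
move=> hC hA hx hfx d0 he heN.
have I := newt_inv Hv hA hx hfx d0 he heN.
set d := f^`().[x] in I.
set xs := newt f x d in I.
have e0 : 0 <= e by rewrite -he; apply: (inA_v (inA_horner Hv (polyA_deriv Hv hA) hx)).
have step k : vge v (N%:Z + k%:Z - e) (xs k.+1 - xs k).
  have [_ _ hk] := I k.
  have -> : xs k.+1 - xs k = - (f.[xs k] / d) by rewrite /xs /=; ring.
  by apply: (vge_opp Hv); have := vge_mul Hv hk (vge_inv Hv d0); rewrite he.
have far n0 k : vge v (N%:Z + n0%:Z - e) (xs (n0 + k)%N - xs n0).
  elim: k => [|k IH]; first by rewrite addn0 subrr vge0x.
  have -> : xs (n0 + k.+1)%N - xs n0 = (xs (n0 + k).+1 - xs (n0 + k)%N) + (xs (n0 + k)%N - xs n0).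
    by rewrite addnS; ring.
  apply: (vge_add Hv) => //; apply: (vge_le _ (step _)); lia.
have far2 n0 m : (n0 <= m)%N -> vge v (N%:Z + n0%:Z - e) (xs m - xs n0).
  by move=> hm; rewrite -(subnKC hm); apply: far.
have cau : vcauchy v xs.
  move=> M; exists (absz M) => m n hm hn.
  have -> : xs m - xs n = (xs m - xs (absz M)) - (xs n - xs (absz M)) by ring.
  apply: (vge_le _ (vge_sub Hv (far2 _ _ hm) (far2 _ _ hn))); lia.
have [a ha] := hC _ cau.
have near M : exists n, vge v M (xs n - a) /\ (absz M <= n)%N.
  have [n0 hn0] := ha M; exists (maxn n0 (absz M)); split; last exact: leq_maxr.
  by apply: hn0; exact: leq_maxl.
exists a; split.
  apply/negPn/negP => fa0.
  set M := v f.[a] + 1.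
  have [n [hn hnM]] := near (absz M)%:Z.
  have [hxn _ hfn] := I n.
  have han : inA v (a - xs n).
    have := vge_opp Hv hn; rewrite opprB => H; apply: (vge_le _ H); lia.
  have hn' : vge v (absz M)%:Z (a - xs n) by have := vge_opp Hv hn; rewrite opprB.
  have H1 := horner_diff Hv hA hxn han hn'.
  rewrite [xs n + _]addrC subrK in H1.
  have H2 : vge v (absz M)%:Z f.[xs n] by apply: (vge_le _ hfn); lia.
  have fa0' : (f.[a] == 0) = false by rewrite -rootE; apply/negbTE.
  have := vge_add Hv H1 H2; rewrite subrK /vge fa0' /= /M; lia.
have [n [hn hnM]] := near (N%:Z - e).
have [_ hxn _] := I n.
have := vge_sub Hv hxn hn.
by have -> : xs n - x - (xs n - a) = a - x by ring.
Qed.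
End Hensel2.

Lemma sum_count_ge (T U : eqType) (g : T -> U) (s0 : seq U) (X : seq T) :
  (forall x, x \in X -> g x \in s0) ->
  (size X <= \sum_(b <- s0) count (fun x => g x == b) X)%N.
Proof.
elim: X => [|x X IH] hX /=; first by [].
have h1 : (1 <= \sum_(b <- s0) (g x == b))%N.
  have : g x \in s0 by apply: hX; rewrite inE eqxx.
  elim: s0 {IH hX} => [|b s0 IHs] //=; rewrite inE big_cons.
  by case/orP => [/eqP->|/IHs h]; [rewrite eqxx | lia].
rewrite big_split /=.
have := IH (fun y hy => hX y (mem_behead (s := x :: X) hy)); lia.
Qed.

Lemma sum_le_const (U : eqType) (s0 : seq U) (F : U -> nat) c :
  (forall b, b \in s0 -> (F b <= c)%N) -> (\sum_(b <- s0) F b <= size s0 * c)%N.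
Proof.
elim: s0 => [|b s0 IH] h; first by rewrite big_nil.
rewrite big_cons /= mulSn leq_add //; first by apply: h; rewrite inE eqxx.
by apply: IH => y hy; apply: h; rewrite inE hy orbT.
Qed.

Section Count.
Variables (K : fieldType) (v : K -> int) (pi : K).
Hypothesis Hv : normalized_discrete_valuation v pi.

Lemma count_incong (q m : nat) (X : seq K) : residue_card v q ->
  all (inA v) X -> pairwise (fun a b => ~~ congr_mod v m a b) X ->
  (size X <= q ^ m)%N.
Proof.
move=> Hq; elim: m X => [|m IH] X hA hP.
  case: X hA hP => [|a [|b X]] //= /and3P[ha hb _].
  have hc : congr_mod v 0 a b by exact: (inA_sub Hv ha hb).
  by rewrite hc.
have [s0 [hs0 hs0A hs0d hs0c]] := Hq.
pose g x := nth 0 s0 (find (fun b => congr_mod v 1 x b) s0).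
have hg x : inA v x -> g x \in s0 /\ congr_mod v 1 x (g x).
  move=> hx; have [b hb hxb] := hs0c x hx.
  have hh : has (fun b => congr_mod v 1 x b) s0 by apply/hasP; exists b.
  split; first by rewrite /g mem_nth // -has_find.
  exact: (nth_find 0 hh).
apply: leq_trans (sum_count_ge (g := g) (s0 := s0) _) _.
  by move=> x hx; case: (hg x (allP hA x hx)).
rewrite expnS -{1}hs0; apply: sum_le_const => b hb.
rewrite -size_filter.
pose t x := (x - b) / pi.
rewrite -(size_map t); apply: IH.
  apply/allP => y /mapP [x]; rewrite mem_filter => /andP[/eqP gx hx] ->.
  have [_ ] := hg x (allP hA x hx); rewrite gx /congr_mod => hxb.
  by have := vge_divpi Hv 1 hxb; rewrite subrr expr1.
rewrite pairwise_map; apply: pairwise_filter.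
apply: sub_pairwise hP => x y /=; apply: contra => hc.
rewrite /congr_mod; apply: (vge_mulpi Hv (k := 1)).
have -> : (m.+1%:Z - 1%:Z) = m%:Z by lia.
by move: hc; rewrite /congr_mod /t expr1; congr (vge _ _ _); field; exact: pi0 Hv.
Qed.
End Count.
Unset Implicit Arguments. Set Strict Implicit.

Theorem corollary3p11 (K : fieldType) (v : K -> int) (pi : K) (q : nat)
  (Hv : normalized_discrete_valuation v pi) (Hcomplete : vcomplete v)
  (Hq : residue_card v q)
  (f : {poly K}) (HfA : polyA v f) (Hmonic : f \is monic)
  (HDelta : resultant f f^`() != 0)
  (r : nat) (Hr : v (resultant f f^`()) = r%:Z)
  (N : nat) (HN : (2 * r < N)%N)
  (L : seq K)
  (HLA : all (inA v) L)
  (HLroot : forall x, x \in L -> vge v N%:Z f.[x])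
  (HLdist : forall i j : nat, (i < size L)%N -> (j < size L)%N ->
              congr_mod v N (nth 0 L i) (nth 0 L j) -> i = j)
  (s : seq K) (Hsuniq : uniq s) (Hsroots : forall x : K, root f x = (x \in s)) :
  (size L <= q ^ r * size s)%N.
Proof.
have rN : (r < N)%N by lia.
have near x : x \in L -> exists2 a, a \in s & vge v (N%:Z - r%:Z) (a - x).
  move=> hx; have hxA := allP HLA x hx.
  have [d0 de] := deriv_bound Hv HfA Hmonic HDelta Hr rN hxA (HLroot x hx).
  have he : v f^`().[x] + v f^`().[x] < N%:Z by move: de HN; clear; lia.
  have [a [ha hax]] := hensel Hv Hcomplete HfA hxA (HLroot x hx) d0 (erefl _) he.
  exists a; first by rewrite -Hsroots.
  by apply: (vge_le _ hax); lia.
pose g x := nth 0 s (find (fun a => vge v (N%:Z - r%:Z) (a - x)) s).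
have hg x : x \in L -> g x \in s /\ vge v (N%:Z - r%:Z) (g x - x).
  move=> hx; have [b hb hxb] := near x hx.
  have hh : has (fun a => vge v (N%:Z - r%:Z) (a - x)) s by apply/hasP; exists b.
  split; first by rewrite /g mem_nth // -has_find.
  exact: (nth_find 0 hh).
apply: leq_trans (sum_count_ge (g := g) (s0 := s) _) _.
  by move=> x hx; case: (hg x hx).
rewrite mulnC; apply: sum_le_const => b hb.
rewrite -size_filter.
pose k := (N - r)%N.
pose t x := (x - b) / pi ^+ k.
rewrite -(size_map t); apply: (count_incong Hv Hq).
  apply/allP => y /mapP [x]; rewrite mem_filter => /andP[/eqP gx hx] ->.
  have [_ ] := hg x hx; rewrite gx => hxb.
  have := vge_divpi Hv k (vge_opp Hv hxb); rewrite opprB => H.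
  by apply: (vge_le _ H); rewrite /k; lia.
rewrite pairwise_map; apply: pairwise_filter.
have hP : pairwise (fun a b => ~~ congr_mod v N a b) L.
  apply/(pairwiseP 0) => i j hi hj hij; apply/negP => hc.
  by have := HLdist i j hi hj hc; move: hij; clear; lia.
apply: sub_pairwise hP => x y /=; apply: contra => hc.
rewrite /congr_mod; apply: (vge_mulpi Hv (k := k)).
have -> : (N%:Z - k%:Z) = r%:Z by rewrite /k; lia.
move: hc; rewrite /congr_mod /t; congr (vge _ _ _); field.
by rewrite expf_neq0 // (pi0 Hv).
Qed.
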